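(* Let $T$ be a tree, $T'$ a subtree of $T$, and let $D$ be a partial decision tree for $T$ which contains no query to a vertex of $T'$ but contains at least one query to a vertex of $N_T(V(T'))$. Let $Q$ be the set of all queries in $D$ to vertices of $N_T(V(T'))$. Then $D\langle Q\rangle$ is a path in $D$.
   Context: A query to a vertex $v$ of $T$ (with hidden target $x$) returns either that $v=x$ or the connected component of $T-v$ containing $x$. A decision tree for $T$ is defined recursively: a rooted tree whose root is a vertex $v$ of $T$ and whose root subtrees are decision trees for the connected components of $T-v$, one per component. A partial decision tree for $T$ is a subtree of some decision tree $D$ for $T$ that contains the root of $D$. $N_T(S)$ denotes the set of vertices outside $S$ adjacent to some vertex of $S$. For a rooted tree $D$ and a vertex set $Q$, $D\langle Q\rangle$ is the minimal connected subtree of $D$ containing $Q$. *)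

(* Defs.v *)
From Stdlib Require List.
From mathcomp Require Import all_boot.
Notation Forall2 := List.Forall2.
Set Implicit Arguments. Unset Strict Implicit. Unset Printing Implicit Defensive.

Section Defs.
Variable V : finType.

Definition is_tree (e : rel V) : Prop :=
  [/\ 0 < #|V|, symmetric e, irreflexive e,
      (forall x y, connect e x y) &
      (forall x p, uniq (x :: p) -> 2 <= size p -> path e x p -> ~~ e (last x p) x)].

Definition conn_in (e : rel V) (W : {set V}) : rel V :=
  connect (fun a b => [&& e a b, a \in W & b \in W]).

Definition connected_set (e : rel V) (W : {set V}) : Prop :=
  forall x y, x \in W -> y \in W -> conn_in e W x y.

Definition components (e : rel V) (W : {set V}) : {set {set V}} :=
  [set [set y in W | conn_in e W x y] | x in W].

Definition subtree_set (e : rel V) (S : {set V}) : Prop :=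
  S != set0 /\ connected_set e S.

Definition nbhd (e : rel V) (S : {set V}) : {set V} :=
  [set x | (x \notin S) && [exists y in S, e x y]].

Inductive dtree : Type := DNode of V & seq dtree.

Definition dlabel (t : dtree) : V := let: DNode v _ := t in v.

Fixpoint dlabels (t : dtree) : seq V :=
  let: DNode v cs := t in
  v :: (fix aux (l : seq dtree) := if l is c :: l' then dlabels c ++ aux l' else [::]) cs.

Fixpoint dedges (t : dtree) : seq (V * V) :=
  let: DNode v cs := t in
  [seq (v, dlabel c) | c <- cs] ++
  (fix aux (l : seq dtree) := if l is c :: l' then dedges c ++ aux l' else [::]) cs.

(** decision tree for the component W of (the current remainder of) T:
    root v in W, children = decision trees for the components of T[W] - v,
    one per component. *)
Inductive is_dtree (e : rel V) : {set V} -> dtree -> Prop :=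
| DT (W : {set V}) (v : V) (cs : seq dtree) (comps : seq {set V}) :
    v \in W ->
    perm_eq comps (enum (components e (W :\ v))) ->
    Forall2 (is_dtree e) comps cs ->
    is_dtree e W (DNode v cs).

(** [prune D D0]: D is a subtree of D0 containing the root of D0 *)
Inductive prune : dtree -> dtree -> Prop :=
| Pr (v : V) (cs' cs : seq dtree) (m : bitseq) :
    Forall2 prune cs' (mask m cs) -> prune (DNode v cs') (DNode v cs).

Definition partial_dtree (e : rel V) (D : dtree) : Prop :=
  exists D0, is_dtree e [set: V] D0 /\ prune D D0.

(** In a (partial) decision tree distinct nodes carry distinct labels, so we
    identify nodes of D with their labels; [dadj D] is the adjacency of D. *)
Definition dadj (D : dtree) : rel V :=
  fun x y => ((x, y) \in dedges D) || ((y, x) \in dedges D).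

Definition dnodes (D : dtree) : {set V} := [set x in dlabels D].

(** D<Q>: minimal connected subtree of D containing Q
    (intersection of all connected node sets of D containing Q) *)
Definition dhull (D : dtree) (Q : {set V}) : {set V} :=
  \bigcap_(X : {set V} | [&& Q \subset X, X \subset dnodes D &
        [forall x in X, forall y in X, conn_in (dadj D) X x y]]) X.

Definition is_dpath (D : dtree) (X : {set V}) : Prop :=
  exists x p, [/\ path (dadj D) x p, uniq (x :: p) & [set y in x :: p] = X].

End Defs.

(* Main.v *)
Require Import Defs.
From mathcomp Require Import all_boot.
Set Implicit Arguments. Unset Strict Implicit. Unset Printing Implicit Defensive.

Section Main.
Variable V : finType.
Variable e : rel V.

Definition dchildren (t : dtree V) := let: DNode _ cs := t in cs.

Definition dtree_ind2 (P : dtree V -> Prop)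
  (H : forall v cs, (forall c, List.In c cs -> P c) -> P (DNode v cs)) :
  forall t, P t :=
  fix F t := let: DNode v cs := t in H v cs
    ((fix G (l : seq (dtree V)) : forall c, List.In c l -> P c :=
      match l with
      | [::] => fun c (h : List.In c [::]) => False_ind _ h
      | c' :: l' => fun c h => match h with
          | or_introl E => eq_ind c' P (F c') c E
          | or_intror h' => G l' c h' end
      end) cs).

Lemma dlabelsE v cs : dlabels (DNode v cs) = v :: flatten (map (@dlabels V) cs).
Proof. by rewrite /=; congr cons; elim: cs => //= c cs ->. Qed.

Lemma dedgesE v cs : dedges (DNode v cs) =
  [seq (v, dlabel c) | c <- cs] ++ flatten (map (@dedges V) cs).
Proof. by rewrite /=; congr cat; elim: cs => //= c cs ->. Qed.


Lemma In_mask (A : Type) (m : bitseq) (s : seq A) y : List.In y (mask m s) -> List.In y s.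
Proof.
elim: s m => [|a s IH] m //=; case: m => [|b m] //=.
case: b => //=; last by move/IH; right.
by case=> [->|/IH]; [left|right].
Qed.

Lemma Forall2_mask (A B : Type) (R : A -> B -> Prop) m a b :
  Forall2 R a b -> Forall2 R (mask m a) (mask m b).
Proof.
move=> H; elim: H m => [|x y a' b' Hxy _ IH] [|[] m] //=; try by constructor.
Qed.

Lemma Forall2_comb (A B C : Type) (P : A -> B -> Prop) (Q : C -> B -> Prop)
  (R : A -> C -> Prop) a b c :
  Forall2 P a b -> Forall2 Q c b ->
  (forall x y z, List.In y b -> P x y -> Q z y -> R x z) -> Forall2 R a c.
Proof.
move=> H; elim: H c => [|x y a' b' Hxy _ IH] c H2 HR; inversion H2; subst.
  by constructor.
constructor; first by apply: (HR x y) => //; left.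
by apply: IH => // x' y' z' Hi; apply: HR; right.
Qed.

Inductive good : {set V} -> dtree V -> Prop :=
| Good (W : {set V}) (v : V) (cs : seq (dtree V)) (comps : seq {set V}) : v \in W -> uniq comps ->
    {subset comps <= components e (W :\ v)} -> Forall2 good comps cs ->
    good W (DNode v cs).

Lemma prune_good D0 : forall W D, is_dtree e W D0 -> prune D D0 -> good W D.
Proof.
elim/dtree_ind2: D0 => v cs IH W D Hd Hp.
inversion Hd; subst; inversion Hp; subst.
apply: (@Good _ _ _ (mask m comps)) => //.
- by apply: mask_uniq; rewrite (perm_uniq H3) enum_uniq.
- by move=> C /mem_mask; rewrite (perm_mem H3) mem_enum.
apply: (Forall2_comb (Forall2_mask m H4) H2) => x y z Hy Hxy Hzy.
exact: (IH y (In_mask Hy)).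
Qed.

Lemma comp_sub (W' C : {set V}) : C \in components e W' -> C \subset W'.
Proof.
by case/imsetP=> x _ ->; apply/subsetP=> y; rewrite inE => /andP[].
Qed.

Hypothesis esym : symmetric e.

Lemma restr_sym (W' : {set V}) : symmetric (fun a b => [&& e a b, a \in W' & b \in W']).
Proof. by move=> a b; rewrite esym; case: (a \in W'); case: (b \in W'); rewrite ?andbT ?andbF. Qed.

Lemma conn_in_sym (W' : {set V}) a b : conn_in e W' a b -> conn_in e W' b a.
Proof. by rewrite /conn_in (sym_connect_sym (restr_sym W')). Qed.

Lemma comp_eq (W' : {set V}) (C1 C2 : {set V}) y : C1 \in components e W' -> C2 \in components e W' ->
  y \in C1 -> y \in C2 -> C1 = C2.
Proof.
case/imsetP=> x1 _ -> /imsetP[x2 _ ->]; rewrite !inE => /andP[_ h1] /andP[_ h2].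
apply/setP=> z; rewrite !inE; case: (z \in W') => //=; apply/idP/idP => hz.
  exact: connect_trans h2 (connect_trans (conn_in_sym h1) hz).
exact: connect_trans h1 (connect_trans (conn_in_sym h2) hz).
Qed.

Lemma flatten_in (cs : seq (dtree V)) c x : List.In c cs -> x \in dlabels c ->
  x \in flatten (map (@dlabels V) cs).
Proof.
elim: cs => [|a cs IH] //= [->|Hc] Hx; rewrite mem_cat ?Hx //.
by rewrite IH ?orbT.
Qed.

Lemma good_flat (W' : {set V}) comps cs :
  Forall2 good comps cs ->
  (forall c, List.In c cs -> forall W, good W c ->
     {subset dlabels c <= W} /\ uniq (dlabels c)) ->
  uniq comps -> {subset comps <= components e W'} ->
  [/\ {subset flatten (map (@dlabels V) cs) <= W'},
      uniq (flatten (map (@dlabels V) cs)) &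
      forall x, x \in flatten (map (@dlabels V) cs) -> exists2 C, C \in comps & x \in C].
Proof.
elim=> [|C c comps' cs' Hg _ IH] //= IHc /andP[Cn Uc] Hsub.
have [IH1 IH2 IH3] := IH (fun c' h => IHc c' (or_intror h)) Uc
   (fun x h => Hsub x (@mem_behead _ (C :: comps') x h)).
have [Hc1 Hc2] := IHc c (or_introl erefl) C Hg.
have CW : C \in components e W' by apply: Hsub; rewrite inE eqxx.
split.
- move=> x; rewrite mem_cat => /orP[/Hc1 /(subsetP (comp_sub CW))|/IH1] //.
- rewrite cat_uniq Hc2 IH2 andbT /=; apply/hasPn => x /IH3 [C' C'in xC'].
  apply/negP => /Hc1 xC; have E := comp_eq CW (Hsub C' (@mem_behead _ (C :: comps') C' C'in)) xC xC'.
  by move: Cn; rewrite E C'in.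
- move=> x; rewrite mem_cat => /orP[/Hc1 xC|/IH3 [C' C'in xC']].
    by exists C; rewrite ?inE ?eqxx.
  by exists C'; rewrite ?inE ?C'in ?orbT.
Qed.

Lemma good_labels t : forall W, good W t -> {subset dlabels t <= W} /\ uniq (dlabels t).
Proof.
elim/dtree_ind2: t => v cs IH W Hg; inversion Hg; subst.
have [F1 F2 F3] := good_flat H5 IH H2 H4.
rewrite dlabelsE; split.
  by move=> x; rewrite inE => /orP[/eqP->|/F1] //; rewrite inE => /andP[].
rewrite cons_uniq F2 andbT; apply/negP => /F1; rewrite !inE eqxx.
by [].
Qed.

Inductive sub : dtree V -> dtree V -> Prop :=
| SubRefl t : sub t t
| SubStep n v cs c : List.In c cs -> sub n c -> sub n (DNode v cs).

Lemma mem_map_In (A : Type) (T : eqType) (f : A -> T) s y :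
  y \in map f s -> exists c, List.In c s /\ y = f c.
Proof.
elim: s => [|a s IH] //=; rewrite inE => /orP[/eqP->|/IH [c [H1 H2]]].
  by exists a; split => //; left.
by exists c; split => //; right.
Qed.

Lemma mem_flatten_In (A : Type) (T : eqType) (g : A -> seq T) s x :
  x \in flatten (map g s) -> exists c, List.In c s /\ x \in g c.
Proof.
elim: s => [|a s IH] //=; rewrite mem_cat => /orP[H|/IH [c [H1 H2]]].
  by exists a; split => //; left.
by exists c; split => //; right.
Qed.

Lemma flatten_In (A : Type) (T : eqType) (g : A -> seq T) s c x :
  List.In c s -> x \in g c -> x \in flatten (map g s).
Proof.
elim: s => [|a s IH] //= [->|Hc] Hx; rewrite mem_cat ?Hx //.
by rewrite IH ?orbT.
Qed.

Lemma dlabel_in (t : dtree V) : dlabel t \in dlabels t.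
Proof. by case: t => v cs; rewrite dlabelsE inE eqxx. Qed.

Lemma sub_labels n t : sub n t -> {subset dlabels n <= dlabels t}.
Proof.
elim=> [t' x //|n' v cs c Hc _ IH x /IH Hx].
by rewrite dlabelsE inE (flatten_In Hc Hx) orbT.
Qed.

Lemma sub_trans a b c : sub a b -> sub b c -> sub a c.
Proof.
move=> Hab Hbc; elim: Hbc a Hab => // n v cs c' Hc _ IH a Hab.
exact: SubStep Hc (IH a Hab).
Qed.

Lemma edge_labels (t : dtree V) u w : (u, w) \in dedges t -> u \in dlabels t /\ w \in dlabels t.
Proof.
elim/dtree_ind2: t => v cs IH; rewrite dedgesE mem_cat dlabelsE.
case/orP=> [/mem_map_In [c [Hc [-> ->]]]|/mem_flatten_In [c [Hc Hin]]].
  by rewrite !inE eqxx (flatten_In Hc (dlabel_in c)) orbT.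
have [h1 h2] := IH c Hc Hin.
by rewrite !inE (flatten_In Hc h1) (flatten_In Hc h2) !orbT.
Qed.

Lemma flat_disj (cs : seq (dtree V)) c c' x :
  uniq (flatten (map (@dlabels V) cs)) -> List.In c cs -> List.In c' cs ->
  x \in dlabels c -> x \in dlabels c' -> c = c'.
Proof.
elim: cs => [|a cs IH] //=; rewrite cat_uniq => /and3P[_ Hh U] Hc Hc' Hx Hx'.
case: Hc => [Ea|Hc]; case: Hc' => [Ea'|Hc'].
- by rewrite -Ea -Ea'.
- by subst a; case/hasP: Hh; exists x => //; exact: flatten_In Hc' Hx'.
- by subst a; case/hasP: Hh; exists x => //; exact: flatten_In Hc Hx.
- exact: IH.
Qed.

Lemma uniq_flat (v : V) cs : uniq (dlabels (DNode v cs)) ->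
  v \notin flatten (map (@dlabels V) cs) /\ uniq (flatten (map (@dlabels V) cs)).
Proof. by rewrite dlabelsE cons_uniq => /andP[]. Qed.

Lemma uniq_child (v : V) cs (c : dtree V) : uniq (dlabels (DNode v cs)) -> List.In c cs -> uniq (dlabels c).
Proof.
move=> /uniq_flat [_]; elim: cs => [|a cs IH] //=; rewrite cat_uniq => /and3P[Ua _ U].
by case=> [<-|/IH]; [|apply].
Qed.

Lemma head_notin v cs (c n : dtree V) : uniq (dlabels (DNode v cs)) -> List.In c cs -> sub n c ->
  v \notin dlabels n.
Proof.
move=> /uniq_flat [Hv _] Hc Hs; apply/negP => /(sub_labels Hs) /(flatten_In Hc).
by rewrite (negbTE Hv).
Qed.

Lemma sub_head (n t : dtree V) : uniq (dlabels t) -> sub n t -> dlabel t \in dlabels n -> n = t.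
Proof.
move=> U Hs; case: Hs U => [//|n' v cs c Hc Hs U] /=.
by rewrite (negbTE (head_notin U Hc Hs)).
Qed.

Lemma crossing (t : dtree V) : forall n u w, uniq (dlabels t) -> sub n t -> (u, w) \in dedges t ->
  (u \in dlabels n) = (w \in dlabels n) \/ w = dlabel n.
Proof.
elim/dtree_ind2: t => v cs IH n u w U Hs He.
inversion Hs; subst.
  by have [-> ->] := edge_labels He; left.
have [_ Uf] := uniq_flat U.
move: He; rewrite dedgesE mem_cat.
case/orP=> [/mem_map_In [c' [Hc' [-> ->]]]|/mem_flatten_In [c' [Hc' Hin]]].
  rewrite (negbTE (head_notin U H2 H3)).
  case Hw: (dlabel c' \in dlabels n); last by left.
  have E : c' = c by apply: (flat_disj Uf Hc' H2 (dlabel_in c')); exact: sub_labels H3 _ Hw.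
  subst c'; right; by rewrite (sub_head (uniq_child U H2) H3 Hw).
have [h1 h2] := edge_labels Hin.
case Hu: (u \in dlabels n); case Hw: (w \in dlabels n); try by left.
  have E : c' = c by apply: (flat_disj Uf Hc' H2 h1); exact: sub_labels H3 _ Hu.
  by subst c'; move: (IH c H2 n u w (uniq_child U H2) H3 Hin); rewrite Hu Hw.
have E : c' = c by apply: (flat_disj Uf Hc' H2 h2); exact: sub_labels H3 _ Hw.
by subst c'; move: (IH c H2 n u w (uniq_child U H2) H3 Hin); rewrite Hu Hw.
Qed.

Inductive vchain : dtree V -> seq (dtree V) -> Prop :=
| VC0 t : vchain t [::]
| VC1 v cs c l : List.In c cs -> vchain c l -> vchain (DNode v cs) (c :: l).

Lemma In_map_mem (A : Type) (T : eqType) (f : A -> T) s c :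
  List.In c s -> f c \in map f s.
Proof. by elim: s => [|a s IH] //= [->|/IH H]; rewrite inE ?eqxx ?H ?orbT. Qed.

Lemma vchain_labels t l : vchain t l -> {subset map (@dlabel V) (t :: l) <= dlabels t}.
Proof.
elim=> [t' x|v cs c l' Hc _ IH x].
  by rewrite inE => /eqP->; exact: dlabel_in.
rewrite [map _ _]/= inE => /orP[/eqP->|/IH H]; first exact: (dlabel_in (DNode v cs)).
by rewrite dlabelsE inE (flatten_In Hc H) orbT.
Qed.

Lemma vchain_uniq t l : uniq (dlabels t) -> vchain t l -> uniq (map (@dlabel V) (t :: l)).
Proof.
move=> U H; elim: H U => [//|v cs c l' Hc Hv IH U].
rewrite [map _ _]/= cons_uniq IH ?(uniq_child U Hc) // andbT.
have [Hn _] := uniq_flat U.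
by apply/negP => /(vchain_labels Hv) /(flatten_In Hc); rewrite (negbTE Hn).
Qed.

Lemma child_edge n D c : sub n D -> List.In c (dchildren n) ->
  (dlabel n, dlabel c) \in dedges D.
Proof.
elim=> [[v cs]|n' v cs c' Hc' _ IH] Hc.
  by rewrite dedgesE mem_cat (In_map_mem (fun c => (v, dlabel c)) Hc).
by rewrite dedgesE mem_cat (flatten_In Hc' (IH Hc)) orbT.
Qed.

Lemma vchain_path D t l : sub t D -> vchain t l -> path (dadj D) (dlabel t) (map (@dlabel V) l).
Proof.
move=> Ht H; elim: H Ht => [//|v cs c l' Hc Hv IH Ht] /=.
have Hc' : sub c D by apply: sub_trans Ht; exact: SubStep Hc (SubRefl c).
rewrite (IH Hc') andbT.
by rewrite /dadj (child_edge Ht).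
Qed.

Lemma vchain_cut t l : uniq (dlabels t) -> vchain t l -> forall l1 n l2,
  t :: l = l1 ++ n :: l2 ->
  [/\ sub n t, {subset map (@dlabel V) l2 <= dlabels n} &
     forall u, u \in map (@dlabel V) l1 -> u \notin dlabels n].
Proof.
move=> U H; elim: H U => [t'|v cs c l' Hc Hv IH] U [|a l1] n l2 //=.
- by case=> -> <-; split => //; exact: SubRefl.
- by case=> _; case: l1.
- case=> <- <-; split => //; first exact: SubRefl.
  move=> x /(vchain_labels Hv) Hx; rewrite dlabelsE inE (flatten_In Hc Hx) orbT //.
case=> <- E; have [S1 S2 S3] := IH (uniq_child U Hc) l1 n l2 E.
split => //; first exact: SubStep Hc S1.
move=> u; rewrite inE => /orP[/eqP->|/S3 //]; exact: head_notin U Hc S1.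
Qed.

Lemma map_split (A : Type) (T : eqType) (f : A -> T) s l1 y l2 :
  map f s = l1 ++ y :: l2 ->
  exists s1 n s2, [/\ s = s1 ++ n :: s2, l1 = map f s1, y = f n & l2 = map f s2].
Proof.
elim: l1 s => [|a l1 IH] [|b s] //= [E1 E2].
  by exists [::], b, s.
have [s1 [n [s2 [-> -> -> ->]]]] := IH s E2.
by exists (b :: s1), n, s2; rewrite -E1.
Qed.

Lemma walk_cross (r : rel V) (A : pred V) x p : path r x p -> ~~ A x -> A (last x p) ->
  exists a b, [/\ r a b, ~~ A a & A b].
Proof.
elim: p x => [|b p IH] x /=; first by move=> _ /negbTE->.
case/andP=> rxb Hp nx Hl; case Hb: (A b).
  by exists x, b; rewrite Hb.
by apply: IH Hp _ Hl; rewrite Hb.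
Qed.

Lemma cut D l : uniq (dlabels D) -> vchain D l -> forall l1 y l2,
  map (@dlabel V) (D :: l) = l1 ++ y :: l2 -> forall u w (X : {set V}),
  u \in l1 -> w \in l2 -> conn_in (dadj D) X u w -> y \in X.
Proof.
move=> U Hv l1 y l2 /map_split [s1 [n [s2 [E -> -> ->]]]] u w X Hu Hw.
have [Sn S2 S1] := vchain_cut U Hv E.
move/connectP=> [p Hp Hl].
have Hl' : last u p \in dlabels n by rewrite -Hl; exact: S2.
have [a [b [/and3P[Hab aX bX] Ha Hb]]] :=
  @walk_cross _ (fun z => z \in dlabels n) u p Hp (S1 u Hu) Hl'.
case/orP: Hab => He.
  case: (crossing U Sn He) => [E2|<-] //.
  by move: Ha Hb; rewrite E2 => /negbTE->.
case: (crossing U Sn He) => [E2|E2].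
  by move: Ha Hb; rewrite E2 => /negbTE->.
by move: Ha; rewrite E2 dlabel_in.
Qed.

Lemma conn_mono (A B : {set V}) a b : A \subset B -> conn_in e A a b -> conn_in e B a b.
Proof.
move=> AB; apply: connect_sub => x y /and3P[h hx hy]; apply: connect1.
by rewrite h (subsetP AB x hx) (subsetP AB y hy).
Qed.

Lemma nbhd_comp (W' C S : {set V}) x : S \subset W' -> connected_set e S ->
  C \in components e W' -> x \in C -> x \in nbhd e S -> S \subset C.
Proof.
move=> SW cS CW; have CW' := comp_sub CW; move: CW => /imsetP [x0 x0W ->].
rewrite !inE => /andP[xW cx] /andP[_ /existsP [y /andP[yS exy]]].
apply/subsetP => s sS; rewrite inE (subsetP SW s sS) /=.
apply: connect_trans cx _; apply: connect_trans (conn_mono SW (cS y s yS sS)).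
by apply: connect1; rewrite exy xW (subsetP SW y yS).
Qed.

Lemma chain_list (S W' : {set V}) comps cs :
  S \subset W' -> connected_set e S -> S != set0 ->
  Forall2 good comps cs -> uniq comps -> {subset comps <= components e W'} ->
  (forall c, List.In c cs -> forall W, good W c -> S \subset W ->
     (forall x, x \in dlabels c -> x \notin S) ->
     exists l, vchain c l /\ forall x, x \in dlabels c -> x \in nbhd e S ->
        x \in map (@dlabel V) (c :: l)) ->
  (forall x, x \in flatten (map (@dlabels V) cs) -> x \notin S) ->
  (forall x, x \in flatten (map (@dlabels V) cs) -> x \notin nbhd e S) \/
  exists c l, [/\ List.In c cs, vchain c l &
     forall x, x \in flatten (map (@dlabels V) cs) -> x \in nbhd e S ->
        x \in map (@dlabel V) (c :: l)].
Proof.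
move=> SW cS Sn H; elim: H => [|C c comps' cs' Hg Hr IH] /=; first by left.
move=> /andP[Cn Uc] Hsub IHc HS.
have CW : C \in components e W' by apply: Hsub; rewrite inE eqxx.
have Hsub' : {subset comps' <= components e W'}.
  by move=> x h; apply: Hsub; rewrite inE h orbT.
have [F1 F2 F3] := good_flat Hr (fun c _ W h => good_labels h) Uc Hsub'.
have [Lc _] := good_labels Hg.
case SC: (S \subset C).
  have HSc : forall x, x \in dlabels c -> x \notin S.
    by move=> x h; apply: HS; rewrite mem_cat h.
  have [l [Hl1 Hl2]] := IHc c (or_introl erefl) C Hg SC HSc.
  right; exists c, l; split => //; first by left.
  move=> x; rewrite mem_cat => /orP[/Hl2 //|/F3 [C' C'in xC'] xN].
  have SC' := nbhd_comp SW cS (Hsub' C' C'in) xC' xN.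
  case/set0Pn: Sn => s sS.
  have E := comp_eq CW (Hsub' C' C'in) (subsetP SC s sS) (subsetP SC' s sS).
  by move: Cn; rewrite E C'in.
have Hc : forall x, x \in dlabels c -> x \notin nbhd e S.
  move=> x xc; apply/negP => xN.
  by rewrite (nbhd_comp SW cS CW (Lc x xc) xN) in SC.
have HSr : forall x, x \in flatten (map (@dlabels V) cs') -> x \notin S.
  by move=> x h; apply: HS; rewrite mem_cat h orbT.
case: (IH Uc Hsub' (fun c' h => IHc c' (or_intror h)) HSr) => [HA|[c' [l [Hc' Hv Hl]]]].
  by left => x; rewrite mem_cat => /orP[/Hc|/HA].
right; exists c', l; split => //; first by right.
move=> x; rewrite mem_cat => /orP[/Hc /negbTE->|/Hl] //.
Qed.

Lemma chain_exists (S : {set V}) : connected_set e S -> S != set0 ->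
  forall t W, good W t -> S \subset W -> (forall x, x \in dlabels t -> x \notin S) ->
  exists l, vchain t l /\ forall x, x \in dlabels t -> x \in nbhd e S ->
        x \in map (@dlabel V) (t :: l).
Proof.
move=> cS Sn t; elim/dtree_ind2: t => v cs IH W Hg SW HS.
inversion Hg; subst.
have vS : v \notin S by apply: HS; rewrite dlabelsE inE eqxx.
have SW' : S \subset W :\ v.
  apply/subsetP => s sS; rewrite !inE (subsetP SW s sS) andbT.
  by apply/negP => /eqP E; rewrite -E sS in vS.
have HS' : forall x, x \in flatten (map (@dlabels V) cs) -> x \notin S.
  by move=> x h; apply: HS; rewrite dlabelsE inE h orbT.
case: (chain_list SW' cS Sn H5 H2 H4 IH HS') => [HA|[c [l [Hc Hv Hl]]]].
  exists [::]; split; first exact: VC0.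
  move=> x; rewrite dlabelsE inE => /orP[/eqP->|/HA /negbTE->] //.
  by move=> _; rewrite /= inE eqxx.
exists (c :: l); split; first exact: VC1 Hc Hv.
move=> x; rewrite dlabelsE inE => /orP[/eqP->|/Hl H /H]; first by move=> _; rewrite /= inE eqxx.
by move=> Hx; rewrite inE Hx orbT.
Qed.

Lemma trim_front (Q : pred V) xs : has Q xs ->
  exists pre x p, [/\ xs = pre ++ x :: p, Q x & ~~ has Q pre].
Proof.
elim: xs => [|a xs IH] //=; case Qa: (Q a) => /= H.
  by exists [::], a, xs.
have [pre [x [p [-> Qx Hp]]]] := IH H.
by exists (a :: pre), x, p; rewrite /= Qa.
Qed.

Lemma trim_back (Q : pred V) p : forall x, Q x ->
  exists p' post, [/\ p = p' ++ post, Q (last x p') & ~~ has Q post].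
Proof.
elim: p => [|a p IH] x Qx; first by exists [::], [::].
case Qa: (Q a).
  have [p' [post [-> Ql Hp]]] := IH a Qa.
  by exists (a :: p'), post.
have [p' [post [-> Ql Hp]]] := IH x Qx.
case: p' Ql => [|b p'] Ql.
  by exists [::], (a :: post); rewrite /= Qa.
by exists (a :: b :: p'), post.
Qed.

Lemma path_suffix (r : rel V) x0 ps l1 x l2 : path r x0 ps ->
  x0 :: ps = l1 ++ x :: l2 -> path r x l2.
Proof.
elim: l1 x0 ps => [|a l1 IH] x0 ps /=; first by move=> H [<- <-].
move=> H [_ E]; case: ps E H => [|b ps] E H; first by case: l1 E IH.
by case/andP: H => _ H; apply: IH H E.
Qed.

Lemma restr_path (r : rel V) (X : {set V}) x p : path r x p -> x \in X ->
  all (fun y => y \in X) p -> path (fun a b => [&& r a b, a \in X & b \in X]) x p.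
Proof.
elim: p x => [|b p IH] x //= /andP[rb Hp] xX /andP[bX Hall].
by rewrite rb xX bX IH.
Qed.

Lemma restr_sym_gen (r : rel V) (X : {set V}) : symmetric r ->
  symmetric (fun a b => [&& r a b, a \in X & b \in X]).
Proof. by move=> hr a b; rewrite hr; case: (a \in X); case: (b \in X); rewrite ?andbT ?andbF. Qed.

Lemma dadj_sym (D : dtree V) : symmetric (dadj D).
Proof. by move=> a b; rewrite /dadj orbC. Qed.

Lemma final (S : {set V}) (D : dtree V) : connected_set e S -> S != set0 ->
  good setT D -> (forall v, v \in dlabels D -> v \notin S) ->
  (exists v, (v \in dlabels D) && (v \in nbhd e S)) ->
  is_dpath D (dhull D [set v in dlabels D | v \in nbhd e S]).
Proof.
move=> cS Sn Hg HS [q0 /andP[q0D q0N]].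
set Q := [set v in dlabels D | v \in nbhd e S].
have [Lab U] := good_labels Hg.
have [l [Hv Hall]] := chain_exists cS Sn Hg (subsetT S) HS.
have Hpath := vchain_path (SubRefl D) Hv.
have Hu := vchain_uniq U Hv.
have HlD := vchain_labels Hv.
have QinX : forall q, q \in Q -> q \in map (@dlabel V) (D :: l).
  by move=> q; rewrite inE => /andP[h1 h2]; apply: Hall.
have Hhas : has (fun y => y \in Q) (map (@dlabel V) (D :: l)).
  by apply/hasP; exists q0; [exact: Hall q0D q0N | rewrite inE q0D q0N].
have [pre [x [p [E Qx Hpre]]]] := trim_front Hhas.
have [p' [post [Ep Ql Hpost]]] := trim_back p Qx.
rewrite Ep in E.
have Hp : path (dadj D) x p'.
  by have := path_suffix Hpath E; rewrite cat_path => /andP[].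
have Uxp : uniq (x :: p').
  move: Hu; rewrite E cat_uniq => /and3P[_ _].
  by rewrite -cat_cons cat_uniq => /andP[].
have Qsub : forall q, q \in Q -> q \in x :: p'.
  move=> q Hq; have := QinX q Hq; rewrite E mem_cat => /orP[Hq'|].
    by case/hasP: Hpre; exists q.
  rewrite -cat_cons mem_cat => /orP[//|Hq'].
  by case/hasP: Hpost; exists q.
set M := [set y in x :: p'].
have HM : dhull D Q = M.
  apply/eqP; rewrite eqEsubset; apply/andP; split.
    rewrite /dhull; apply: (@bigcap_inf _ _ M _ (fun X => X)); apply/and3P; split.
    - by apply/subsetP => q /Qsub Hq; rewrite /M inE.
    - apply/subsetP => y; rewrite /M /dnodes !in_set => Hy; apply: HlD.
      by rewrite E -cat_cons !mem_cat Hy !orbT.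
    - apply/forallP => y; apply/implyP => yM; apply/forallP => z; apply/implyP => zM.
      have xM : x \in M by rewrite /M in_set mem_head.
      have pM : all (fun y => y \in M) p'.
        by apply/allP => w wp; rewrite /M in_set in_cons wp orbT.
      have Hr := restr_path Hp xM pM.
      have Hsym := sym_connect_sym (restr_sym_gen M (@dadj_sym D)).
      rewrite /M in_set in yM; rewrite /M in_set in zM.
      have cxy := path_connect Hr yM; have cxz := path_connect Hr zM.
      rewrite Hsym in cxy; exact: connect_trans cxy cxz.
  apply/subsetP => y yM; apply/bigcapP => X /and3P[QX XD /forallP HX].
  rewrite inE in_cons in yM; case/orP: yM => [/eqP->|yp].
    by apply: (subsetP QX); exact: Qx.
  case El: (y == last x p').
    by rewrite (eqP El); apply: (subsetP QX); exact: Ql.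
  have [p1 [p2 Ep']] : exists p1 p2, p' = p1 ++ y :: p2.
    by case/splitPr: yp => p1 p2; exists p1, p2.
  rewrite Ep' last_cat /= in El Ql; rewrite Ep' in E.
  case: p2 Ep' El E Ql => [|b r] Ep' El E Ql; first by rewrite /= eqxx in El.
  have xX : x \in X by apply: (subsetP QX).
  have wX : last b r \in X by apply: (subsetP QX).
  have := HX x; rewrite xX /= => /forallP /(_ (last b r)); rewrite wX /= => Hc.
  apply: (cut U Hv (l1 := pre ++ x :: p1) (l2 := (b :: r) ++ post)) Hc.
  - by rewrite E -!catA.
  - by rewrite mem_cat mem_head orbT.
  - by rewrite mem_cat mem_last.
rewrite HM; exists x, p'; split => //.
Qed.

End Main.

Theorem mainTheorem3 (V : finType) (e : rel V) (S : {set V}) (D : dtree V) :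
  is_tree e ->
  subtree_set e S ->
  partial_dtree e D ->
  (forall v, v \in dlabels D -> v \notin S) ->
  (exists v, (v \in dlabels D) && (v \in nbhd e S)) ->
  is_dpath D (dhull D [set v in dlabels D | v \in nbhd e S]).
Proof.
move=> [_ esym _ _ _] [Sn cS] [D0 [Hd Hp]] HS Hex.
have Hg := prune_good Hd Hp.
exact: (final esym cS Sn Hg HS Hex).
Qed.
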